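(* For any affine subspace $L$ as below, the set of minimal elements of $L\cap\Delta^{n-1}_+$ with respect to the Markov order $\succ_{P^*}$ coincides with the set of minimal elements of $L\cap\Delta^{n-1}_+$ with respect to the relation $>_{H,P^*}$. (Here $P^0$ is minimal for a relation $R$ if there is no $P^1\in L\cap\Delta^{n-1}_+$, $P^1\ne P^0$, with $P^0\,R\,P^1$.)
   Context: Fix $n\ge 2$ and a positive equilibrium distribution $P^*=(p^*_i)$, $p^*_i>0$, $\sum_i p^*_i=1$. Let $\Delta^{n-1}_+=\{P\in\mathbb{R}^n: p_i>0,\ \sum_i p_i=1\}$. A Markov chain with equilibrium $P^*$ is given by rate constants $q_{ij}\ge 0$ ($i\neq j$) satisfying $\sum_{j\ne i}q_{ij}p^*_j=\bigl(\sum_{j\ne i}q_{ji}\bigr)p^*_i$ for all $i$, with Kolmogorov equation $\frac{dp_i}{dt}=\sum_{j\ne i}(q_{ij}p_j-q_{ji}p_i)$. $P^0\succ^0_{P^*}P^1$ if for some such chain the solution with $P(0)=P^0$ has $P(1)=P^1$; the Markov order $\succ_{P^*}$ is the closed transitive closure of $\succ^0_{P^*}$. For a convex function $h$ on $[0,\infty)$ (or $(0,\infty)$), the $f$-divergence is $H_h(P\|P^* )=\sum_i p^*_i h(p_i/p^*_i)$. $P^0>_{H,P^*}P^1$ means $H_h(P^0\|P^* )>H_h(P^1\|P^* )$ for all strictly convex functions $h$. The condition manifold is $L=\{P:\ \sum_j m_{rj}p_j=M_r,\ r=0,\dots,k\}$ with $m_{0j}=1$, $M_0=1$, and $L\cap\Delta^{n-1}_+\ne\emptyset$.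 *)

(* Defs.v *)
From Stdlib Require Import Reals Lra Lia.
Open Scope R_scope.

(* Vectors in R^n are functions nat -> R; only coordinates i < n matter. *)

Fixpoint rsum (n : nat) (f : nat -> R) : R :=
  match n with
  | O => 0
  | S k => rsum k f + f k
  end.

Definition rsum_ne (n i : nat) (f : nat -> R) : R :=
  rsum n (fun j => if Nat.eqb j i then 0 else f j).

Definition veq (n : nat) (P Q : nat -> R) : Prop :=
  forall i, (i < n)%nat -> P i = Q i.

Definition in_pos_simplex (n : nat) (P : nat -> R) : Prop :=
  (forall i, (i < n)%nat -> 0 < P i) /\ rsum n P = 1.

(* rate constants q i j (i <> j) of a Markov chain with equilibrium Ps:
   q i j >= 0 and  sum_{j<>i} q_ij p*_j = (sum_{j<>i} q_ji) p*_i. *)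
Definition markov_chain (n : nat) (Ps : nat -> R) (q : nat -> nat -> R) : Prop :=
  (forall i j, (i < n)%nat -> (j < n)%nat -> i <> j -> 0 <= q i j) /\
  (forall i, (i < n)%nat ->
     rsum_ne n i (fun j => q i j * Ps j) = rsum_ne n i (fun j => q j i) * Ps i).

Definition kolmogorov_solution (n : nat) (q : nat -> nat -> R) (X : R -> nat -> R) : Prop :=
  forall i, (i < n)%nat -> forall t,
    derivable_pt_lim (fun s => X s i) t
      (rsum_ne n i (fun j => q i j * X t j - q j i * X t i)).

Definition markov_step (n : nat) (Ps P0 P1 : nat -> R) : Prop :=
  exists q, markov_chain n Ps q /\
    exists X, kolmogorov_solution n q X /\ veq n (X 0) P0 /\ veq n (X 1) P1.

Definition rel_transitive (Rl : (nat -> R) -> (nat -> R) -> Prop) : Prop :=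
  forall a b c, Rl a b -> Rl b c -> Rl a c.

Definition rel_closed (n : nat) (Rl : (nat -> R) -> (nat -> R) -> Prop) : Prop :=
  forall (a b : nat -> nat -> R) (x y : nat -> R),
    (forall k, Rl (a k) (b k)) ->
    (forall i, (i < n)%nat -> Un_cv (fun k => a k i) (x i)) ->
    (forall i, (i < n)%nat -> Un_cv (fun k => b k i) (y i)) ->
    in_pos_simplex n x -> in_pos_simplex n y ->
    Rl x y.

(* Markov order: the closed transitive closure of markov_step on Delta_+,
   i.e. the smallest closed transitive relation on Delta_+ containing it. *)
Definition markov_order (n : nat) (Ps P0 P1 : nat -> R) : Prop :=
  in_pos_simplex n P0 /\ in_pos_simplex n P1 /\
  forall Rl : (nat -> R) -> (nat -> R) -> Prop,
    (forall a b, in_pos_simplex n a -> in_pos_simplex n b ->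
                 markov_step n Ps a b -> Rl a b) ->
    rel_transitive Rl -> rel_closed n Rl -> Rl P0 P1.

Definition strictly_convex_pos (h : R -> R) : Prop :=
  forall x y t, 0 < x -> 0 < y -> x <> y -> 0 < t < 1 ->
    h (t * x + (1 - t) * y) < t * h x + (1 - t) * h y.

Definition f_div (n : nat) (h : R -> R) (P Ps : nat -> R) : R :=
  rsum n (fun i => Ps i * h (P i / Ps i)).

Definition H_order (n : nat) (Ps P0 P1 : nat -> R) : Prop :=
  forall h, strictly_convex_pos h -> f_div n h P0 Ps > f_div n h P1 Ps.

Definition in_L (n k : nat) (m : nat -> nat -> R) (M : nat -> R) (P : nat -> R) : Prop :=
  forall r, (r <= k)%nat -> rsum n (fun j => m r j * P j) = M r.

Definition minimal_in (n : nat) (S : (nat -> R) -> Prop)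
    (Rl : (nat -> R) -> (nat -> R) -> Prop) (P0 : nat -> R) : Prop :=
  S P0 /\ ~ (exists P1, S P1 /\ ~ veq n P1 P0 /\ Rl P0 P1).

(* Main.v *)
Require Import Defs.
From Stdlib Require Import Reals Lra Lia Psatz List Classical FunctionalExtensionality Bool IndefiniteDescription.
From Coquelicot Require Coquelicot.
Open Scope R_scope.

Lemma rsum_ext n f g : (forall i, (i < n)%nat -> f i = g i) -> rsum n f = rsum n g.
Proof. induction n; simpl; intros H; auto. rewrite IHn by (intros; apply H; lia).
  rewrite H by lia. reflexivity. Qed.

Lemma rsum_plus n f g : rsum n (fun i => f i + g i) = rsum n f + rsum n g.
Proof. induction n; simpl; [lra| rewrite IHn; lra]. Qed.

Lemma rsum_scal n c f : rsum n (fun i => c * f i) = c * rsum n f.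
Proof. induction n; simpl; [lra| rewrite IHn; lra]. Qed.

Lemma rsum_minus n f g : rsum n (fun i => f i - g i) = rsum n f - rsum n g.
Proof. induction n; simpl; [lra| rewrite IHn; lra]. Qed.

Lemma rsum_zero n f : (forall i, (i < n)%nat -> f i = 0) -> rsum n f = 0.
Proof. induction n; simpl; intros H; auto. rewrite IHn by (intros; apply H; lia).
  rewrite H by lia. lra. Qed.

Lemma rsum_le n f g : (forall i, (i<n)%nat -> f i <= g i) -> rsum n f <= rsum n g.
Proof. induction n; simpl; intros H; [lra|].
  pose proof (IHn ltac:(intros; apply H; lia)). pose proof (H n ltac:(lia)). lra. Qed.

Lemma rsum_lt n f g : (forall i, (i<n)%nat -> f i <= g i) ->
  (exists i, (i<n)%nat /\ f i < g i) -> rsum n f < rsum n g.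
Proof. induction n; simpl; intros H [i [Hi Hl]]; [lia|].
  destruct (Nat.eq_dec i n).
  - subst. pose proof (rsum_le n f g ltac:(intros; apply H; lia)). lra.
  - assert (rsum n f < rsum n g) by (apply IHn; [intros; apply H; lia| exists i; split; [lia|auto]]).
    specialize (H n ltac:(lia)). lra. Qed.

Lemma rsum_abs n f : Rabs (rsum n f) <= rsum n (fun i => Rabs (f i)).
Proof. induction n; simpl. rewrite Rabs_R0; lra.
  eapply Rle_trans. apply Rabs_triang. lra. Qed.

Lemma rsum_swap n m f : rsum n (fun i => rsum m (fun j => f i j)) = rsum m (fun j => rsum n (fun i => f i j)).
Proof. induction n; simpl.
  - symmetry; apply rsum_zero; auto.
  - rewrite IHn. rewrite <- rsum_plus. reflexivity. Qed.

Lemma rsum_delta n k c : (k < n)%nat -> rsum n (fun j => if Nat.eqb j k then c else 0) = c.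
Proof. induction n; intros Hk; [lia|]. simpl. destruct (Nat.eq_dec k n).
  - subst. rewrite Nat.eqb_refl. rewrite rsum_zero. lra.
    intros i Hi. destruct (Nat.eqb_spec i n); [lia|auto].
  - rewrite IHn by lia. destruct (Nat.eqb_spec n k); [lia|lra]. Qed.

Lemma rsum_ne_eq n i f : (i < n)%nat -> rsum_ne n i f = rsum n f - f i.
Proof. intros Hi. unfold rsum_ne.
  rewrite <- (rsum_delta n i (f i)) by auto. rewrite <- rsum_minus.
  apply rsum_ext. intros j Hj. destruct (Nat.eqb_spec j i); subst; lra. Qed.

Lemma rsum_ext_ne n i f g : (forall j, (j < n)%nat -> j <> i -> f j = g j) -> rsum_ne n i f = rsum_ne n i g.
Proof. intros H; unfold rsum_ne; apply rsum_ext; intros j Hj. destruct (Nat.eqb_spec j i); auto. Qed.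

Lemma rsum_ne_plus n i f g : rsum_ne n i (fun j => f j + g j) = rsum_ne n i f + rsum_ne n i g.
Proof. unfold rsum_ne. rewrite <- rsum_plus. apply rsum_ext. intros j _. destruct (j =? i)%nat; lra. Qed.
Lemma rsum_ne_minus n i f g : rsum_ne n i (fun j => f j - g j) = rsum_ne n i f - rsum_ne n i g.
Proof. unfold rsum_ne. rewrite <- rsum_minus. apply rsum_ext. intros j _. destruct (j =? i)%nat; lra. Qed.
Lemma rsum_ne_scal n i c f : rsum_ne n i (fun j => c * f j) = c * rsum_ne n i f.
Proof. unfold rsum_ne. rewrite <- rsum_scal. apply rsum_ext. intros j _. destruct (j =? i)%nat; lra. Qed.
Lemma rsum_ne_scal_r n i c f : rsum_ne n i (fun j => f j * c) = rsum_ne n i f * c.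
Proof. rewrite Rmult_comm, <- rsum_ne_scal. unfold rsum_ne; apply rsum_ext. intros j _. destruct (j =? i)%nat; lra. Qed.
Lemma rsum_ne_le n i f g : (forall j, (j<n)%nat -> j <> i -> f j <= g j) -> rsum_ne n i f <= rsum_ne n i g.
Proof. intros H; unfold rsum_ne; apply rsum_le; intros j Hj. destruct (Nat.eqb_spec j i); [lra|auto]. Qed.
Lemma rsum_ne_abs n i f : Rabs (rsum_ne n i f) <= rsum_ne n i (fun j => Rabs (f j)).
Proof. unfold rsum_ne. eapply Rle_trans. apply rsum_abs. apply rsum_le. intros j _.
  destruct (j =? i)%nat; rewrite ?Rabs_R0; lra. Qed.

Lemma rsum_ne_swap n f : rsum n (fun i => rsum_ne n i (fun j => f i j)) = rsum n (fun j => rsum_ne n j (fun i => f i j)).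
Proof. unfold rsum_ne. rewrite rsum_swap. apply rsum_ext; intros j _. apply rsum_ext; intros i _.
  rewrite Nat.eqb_sym. reflexivity. Qed.

Lemma rsum_ne_single n i j c f : (j < n)%nat -> j <> i -> (forall k, (k<n)%nat -> k <> i -> k <> j -> f k = 0) -> f j = c -> rsum_ne n i f = c.
Proof. intros Hj Hji H Hc. unfold rsum_ne. rewrite <- (rsum_delta n j c) by auto. apply rsum_ext. intros k Hk.
  destruct (Nat.eqb_spec k i); destruct (Nat.eqb_spec k j); subst; try lia; auto. Qed.

Lemma rsum_cv n (u : nat -> nat -> R) (l : nat -> R) :
  (forall i, (i<n)%nat -> Un_cv (fun k => u k i) (l i)) -> Un_cv (fun k => rsum n (u k)) (rsum n l).
Proof. induction n; simpl; intros H.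
  - intros e He; exists 0%nat; intros; unfold R_dist; rewrite Rminus_diag, Rabs_R0; lra.
  - apply CV_plus. apply IHn; intros; apply H; lia. apply H; lia. Qed.


Fixpoint maxaff (p0 : R*R) (l : list (R*R)) (y : R) : R :=
  match l with nil => fst p0 + snd p0 * y
  | p :: l' => Rmax (fst p + snd p * y) (maxaff p0 l' y) end.
Fixpoint slaff (p0 : R*R) (l : list (R*R)) (y : R) : R :=
  match l with nil => snd p0
  | p :: l' => if Rle_dec (fst p + snd p * y) (maxaff p0 l' y) then slaff p0 l' y else snd p end.
Fixpoint bnd (p0 : R*R) (l : list (R*R)) : R :=
  match l with nil => Rabs (snd p0) | p :: l' => Rabs (snd p) + bnd p0 l' end.

Lemma maxaff_subgrad p0 l y w : maxaff p0 l w >= maxaff p0 l y + slaff p0 l y * (w - y).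
Proof. induction l as [|p l IH]; simpl. lra.
  destruct (Rle_dec (fst p + snd p * y) (maxaff p0 l y)) as [H|H]; simpl.
  - rewrite (Rmax_right _ _ H). pose proof (Rmax_r (fst p + snd p * w) (maxaff p0 l w)). lra.
  - apply Rnot_le_lt in H. rewrite (Rmax_left (fst p + snd p * y)) by lra. pose proof (Rmax_l (fst p + snd p * w) (maxaff p0 l w)). lra. Qed.

Lemma bnd_nonneg p0 l : 0 <= bnd p0 l.
Proof. induction l; simpl; pose proof (Rabs_pos (snd p0)); try pose proof (Rabs_pos (snd a)); lra. Qed.

Lemma slaff_bnd p0 l y : Rabs (slaff p0 l y) <= bnd p0 l.
Proof. induction l as [|p l IH]; simpl. lra.
  pose proof (Rabs_pos (snd p)). pose proof (bnd_nonneg p0 l).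
  destruct (Rle_dec _ _); lra. Qed.

Lemma Rmax_diff a b c d : Rabs (Rmax a b - Rmax c d) <= Rabs (a - c) + Rabs (b - d).
Proof. unfold Rmax; repeat destruct Rle_dec; unfold Rabs; repeat destruct Rcase_abs; lra. Qed.

Lemma maxaff_lip p0 l y z : Rabs (maxaff p0 l y - maxaff p0 l z) <= bnd p0 l * Rabs (y - z).
Proof. induction l as [|p l IH]; simpl.
  - replace (fst p0 + snd p0 * y - (fst p0 + snd p0 * z)) with (snd p0 * (y - z)) by ring.
    rewrite Rabs_mult; lra.
  - eapply Rle_trans. apply Rmax_diff.
    replace (fst p + snd p * y - (fst p + snd p * z)) with (snd p * (y - z)) by ring.
    rewrite Rabs_mult. lra. Qed.

Lemma maxaff_le p0 l y v : (forall p, In p (p0 :: l) -> fst p + snd p * y <= v) -> maxaff p0 l y <= v.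
Proof. induction l as [|p l IH]; simpl; intros H.
  - apply H; simpl; auto.
  - apply Rmax_lub. apply H; simpl; auto. apply IH. intros p' [Hp|Hp]; apply H; simpl; auto. Qed.

Lemma maxaff_ge p0 l y p : In p (p0 :: l) -> fst p + snd p * y <= maxaff p0 l y.
Proof. induction l as [|p' l IH]; simpl; intros H.
  - destruct H as [H|[]]; subst; lra.
  - destruct H as [H|[H|H]].
    + subst. eapply Rle_trans; [|apply Rmax_r]. apply IH; simpl; auto.
    + subst. apply Rmax_l.
    + eapply Rle_trans; [|apply Rmax_r]. apply IH; simpl; auto. Qed.

Lemma maxaff_eq p0 l y v : (forall p, In p (p0 :: l) -> fst p + snd p * y <= v) ->
  (exists p, In p (p0 :: l) /\ fst p + snd p * y = v) -> maxaff p0 l y = v.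
Proof. intros H [p [Hp Hv]]. apply Rle_antisym. apply maxaff_le; auto.
  rewrite <- Hv. apply maxaff_ge; auto. Qed.

Lemma lyap n Ps q (hh g : R -> R) (y : nat -> R) : markov_chain n Ps q ->
  (forall i, (i<n)%nat -> 0 < Ps i) -> (forall u w, hh w >= hh u + g u * (w - u)) ->
  rsum n (fun i => g (y i) * rsum_ne n i (fun j => q i j * (Ps j * y j) - q j i * (Ps i * y i))) <= 0.
Proof. intros [Hq Hbal] HPs Hsub.
  assert (E1 : forall i, (i < n)%nat -> rsum_ne n i (fun j => q i j * (Ps j * y j) - q j i * (Ps i * y i))
     = rsum_ne n i (fun j => q i j * Ps j * (y j - y i))).
  { intros i Hi. rewrite rsum_ne_minus.
    rewrite (rsum_ext_ne n i (fun j => q i j * Ps j * (y j - y i)) (fun j => q i j * (Ps j * y j) - (q i j * Ps j) * y i)) by (intros; ring).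
    rewrite rsum_ne_minus. rewrite rsum_ne_scal_r.
    rewrite (rsum_ne_scal_r n i (y i) (fun j => q i j * Ps j)).
    rewrite Hbal by auto. ring. }
  apply Rle_trans with (rsum n (fun i => rsum_ne n i (fun j => q i j * Ps j * (hh (y j) - hh (y i))))).
  { apply rsum_le. intros i Hi. rewrite E1 by auto. rewrite <- rsum_ne_scal. apply rsum_ne_le.
    intros j Hj Hji. specialize (Hq i j Hi Hj (not_eq_sym Hji)). specialize (HPs j Hj).
    specialize (Hsub (y i) (y j)).
    assert (0 <= q i j * Ps j) by (apply Rmult_le_pos; lra).
    replace (g (y i) * (q i j * Ps j * (y j - y i))) with ((q i j * Ps j) * (g (y i) * (y j - y i))) by ring.
    replace (q i j * Ps j * (hh (y j) - hh (y i))) with ((q i j * Ps j) * (hh (y j) - hh (y i))) by ring.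
    apply Rmult_le_compat_l; lra. }
  right.
  rewrite (rsum_ext n _ (fun i => rsum_ne n i (fun j => q i j * Ps j * hh (y j)) - rsum_ne n i (fun j => q j i) * Ps i * hh (y i))).
  2:{ intros i Hi. rewrite <- Hbal by auto. rewrite <- rsum_ne_scal_r, <- rsum_ne_minus.
      apply rsum_ext_ne; intros; ring. }
  rewrite rsum_minus. rewrite rsum_ne_swap.
  rewrite (rsum_ext n (fun j => rsum_ne n j (fun i => q i j * Ps j * hh (y j))) (fun j => rsum_ne n j (fun i => q i j) * Ps j * hh (y j))).
  lra. intros j _. rewrite <- !rsum_ne_scal_r. apply rsum_ext_ne; intros; ring. Qed.


Lemma creep (G : R -> R) :
 (forall t, 0 <= t < 1 -> exists d, d > 0 /\ forall s, t < s < t + d -> G s <= G t) ->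
 (forall t, 0 <= t <= 1 -> forall e, e > 0 -> exists d, d > 0 /\ forall s, Rabs (s - t) < d -> Rabs (G s - G t) < e) ->
 G 1 <= G 0.
Proof. intros Hr Hc.
  set (E := fun u => 0 <= u <= 1 /\ forall s, 0 <= s <= u -> G s <= G 0).
  assert (Hb : bound E) by (exists 1; intros u [Hu _]; lra).
  assert (He0 : exists x, E x) by (exists 0; split; [lra| intros s Hs; replace s with 0 by lra; lra]).
  destruct (completeness E Hb He0) as [tau [Hub Hlub]].
  assert (Ht0 : 0 <= tau) by (apply Hub; split; [lra| intros s Hs; replace s with 0 by lra; lra]).
  assert (Ht1 : tau <= 1) by (apply Hlub; intros u [Hu _]; lra).
  assert (Hbel : forall s, 0 <= s < tau -> G s <= G 0).
  { intros s Hs. destruct (classic (exists u, E u /\ s < u)) as [[u [[_ Hu] Hsu]]|Hn].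
    - apply Hu; lra.
    - assert (tau <= s); [|lra]. apply Hlub. intros x Hx. apply Rnot_lt_le. intros Hxs. apply Hn. eauto. }
  assert (Hat : G tau <= G 0).
  { destruct (Req_dec tau 0) as [->|Hne]; [lra|].
    apply Rnot_lt_le. intros Hlt. destruct (Hc tau (conj Ht0 Ht1) (G tau - G 0) ltac:(lra)) as [d [Hd Hd']].
    set (s := Rmax 0 (tau - d/2)).
    assert (Hs1 : 0 <= s) by apply Rmax_l.
    assert (Hs2 : s < tau) by (unfold s; apply Rmax_lub_lt; lra).
    assert (Hs3 : tau - d/2 <= s) by apply Rmax_r.
    specialize (Hd' s ltac:(rewrite Rabs_left by lra; lra)). specialize (Hbel s ltac:(lra)).
    apply Rabs_def2 in Hd'. lra. }
  assert (HEt : forall s, 0 <= s <= tau -> G s <= G 0).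
  { intros s Hs. destruct (Req_dec s tau) as [->|]; auto. apply Hbel; lra. }
  destruct (Req_dec tau 1) as [Heq|Hne].
  - rewrite <- Heq. apply HEt; lra.
  - exfalso. destruct (Hr tau ltac:(lra)) as [d [Hd Hd']].
    set (u := Rmin 1 (tau + d/2)).
    assert (Hu1 : u <= 1) by apply Rmin_l. assert (Hu2 : u <= tau + d/2) by apply Rmin_r.
    assert (Hu3 : tau < u) by (unfold u; apply Rmin_glb_lt; lra).
    assert (E u).
    { split; [lra|]. intros s Hs. destruct (Rle_dec s tau). apply HEt; lra.
      specialize (Hd' s ltac:(lra)). lra. }
    specialize (Hub u H). lra. Qed.

Lemma fin_delta n (Q : nat -> R -> Prop) :
  (forall i, (i<n)%nat -> exists d, d > 0 /\ forall h, Rabs h < d -> Q i h) ->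
  exists d, d > 0 /\ forall h, Rabs h < d -> forall i, (i<n)%nat -> Q i h.
Proof. induction n; intros H.
  - exists 1; split; [lra| intros; lia].
  - destruct IHn as [d1 [Hd1 H1]]. intros; apply H; lia.
    destruct (H n ltac:(lia)) as [d2 [Hd2 H2]].
    exists (Rmin d1 d2). split. apply Rmin_glb_lt; lra.
    intros h Hh i Hi. pose proof (Rmin_l d1 d2). pose proof (Rmin_r d1 d2).
    destruct (Nat.eq_dec i n) as [->|]. apply H2; lra. apply H1; [lra|lia]. Qed.

Lemma deriv_cont f t D : derivable_pt_lim f t D ->
  forall e, e > 0 -> exists d, d > 0 /\ forall h, Rabs h < d -> Rabs (f (t+h) - f t) < e.
Proof. intros Hd e He. destruct (Hd 1 ltac:(lra)) as [d0 Hd0].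
  exists (Rmin d0 (e / (Rabs D + 1))). pose proof (Rabs_pos D).
  split. apply Rmin_glb_lt. apply cond_pos. apply Rdiv_lt_0_compat; lra.
  intros h Hh. pose proof (Rmin_l d0 (e / (Rabs D + 1))). pose proof (Rmin_r d0 (e / (Rabs D + 1))).
  destruct (Req_dec h 0) as [->|Hh0]. rewrite Rplus_0_r, Rminus_diag, Rabs_R0; lra.
  specialize (Hd0 h Hh0 ltac:(lra)).
  replace (f (t+h) - f t) with (h * ((f (t + h) - f t) / h - D) + h * D) by (field; auto).
  eapply Rle_lt_trans. apply Rabs_triang. rewrite !Rabs_mult.
  assert (Habs : 0 < Rabs h) by (apply Rabs_pos_lt; auto).
  assert (Rabs h * (Rabs D + 1) < e).
  { apply Rmult_lt_reg_r with (/ (Rabs D + 1)). apply Rinv_0_lt_compat; lra.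
    rewrite Rmult_assoc, Rinv_r by lra. unfold Rdiv in *. lra. }
  assert (Rabs h * Rabs ((f (t + h) - f t) / h - D) <= Rabs h * 1) by (apply Rmult_le_compat_l; lra).
  nra. Qed.

Lemma rsum_const n c : rsum n (fun _ => c) = INR n * c.
Proof. induction n; simpl rsum. simpl; lra. rewrite IHn, S_INR; ring. Qed.

Definition Phi (n : nat) (Ps : nat -> R) p0 l (P : nat -> R) : R :=
  rsum n (fun i => Ps i * maxaff p0 l (P i / Ps i)).

Definition Kf (n : nat) (q : nat -> nat -> R) (Z : nat -> R) (i : nat) : R :=
  rsum_ne n i (fun j => q i j * Z j - q j i * Z i).


Lemma Phi_lip n Ps p0 l P Q : (forall i, (i<n)%nat -> 0 < Ps i) ->
  Rabs (Phi n Ps p0 l P - Phi n Ps p0 l Q) <= bnd p0 l * rsum n (fun i => Rabs (P i - Q i)).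
Proof. intros HPs. unfold Phi. rewrite <- rsum_minus, <- rsum_scal.
  eapply Rle_trans. apply rsum_abs. apply rsum_le. intros i Hi. specialize (HPs i Hi).
  replace (Ps i * maxaff p0 l (P i / Ps i) - Ps i * maxaff p0 l (Q i / Ps i)) with
    (Ps i * (maxaff p0 l (P i / Ps i) - maxaff p0 l (Q i / Ps i))) by ring.
  rewrite Rabs_mult, (Rabs_right (Ps i)) by lra.
  pose proof (maxaff_lip p0 l (P i / Ps i) (Q i / Ps i)).
  replace (Rabs (P i - Q i)) with (Ps i * Rabs (P i / Ps i - Q i / Ps i)).
  2:{ rewrite <- (Rabs_right (Ps i)) at 1 by lra. rewrite <- Rabs_mult. f_equal. field. lra. }
  pose proof (bnd_nonneg p0 l). nra. Qed.

Lemma Kf_diff n q Z W i : Rabs (Kf n q Z i - Kf n q W i) <=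
  rsum_ne n i (fun j => Rabs (q i j) * Rabs (Z j - W j) + Rabs (q j i) * Rabs (Z i - W i)).
Proof. unfold Kf. rewrite <- rsum_ne_minus. eapply Rle_trans. apply rsum_ne_abs.
  apply rsum_ne_le. intros j _ _.
  replace (q i j * Z j - q j i * Z i - (q i j * W j - q j i * W i)) with
    (q i j * (Z j - W j) - q j i * (Z i - W i)) by ring.
  eapply Rle_trans. apply Rabs_triang. rewrite Rabs_Ropp, !Rabs_mult. lra. Qed.

Lemma right_step n Ps q X p0 l : markov_chain n Ps q -> (forall i, (i<n)%nat -> 0 < Ps i) ->
  kolmogorov_solution n q X -> forall t e, e > 0 ->
  exists d, d > 0 /\ forall s, t < s < t + d -> Phi n Ps p0 l (X s) <= Phi n Ps p0 l (X t) + e * (s - t).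
Proof. intros Hm HPs HX t e He.
  set (B := bnd p0 l). pose proof (bnd_nonneg p0 l) as HB. fold B in HB.
  pose proof (pos_INR n) as Hn.
  set (eta := e / (2 * (B+1) * (INR n + 1))).
  assert (Heta : eta > 0) by (unfold eta; apply Rdiv_lt_0_compat; [lra| nra]).
  destruct (fin_delta n (fun i h => (h <> 0 -> Rabs ((X (t+h) i - X t i)/h - Kf n q (X t) i) < eta) /\
      Rabs (Kf n q (X (t+h)) i - Kf n q (X t) i) < eta)) as [d [Hd Hd']].
  { intros i Hi. pose proof (HX i Hi t) as Hder. fold (Kf n q (X t) i) in Hder.
    destruct (Hder eta Heta) as [d1 Hd1].
    set (Ci := rsum_ne n i (fun j => Rabs (q i j) + Rabs (q j i))).
    assert (HCi : 0 <= Ci). { unfold Ci. unfold rsum_ne. apply Rle_trans with (rsum n (fun _ => 0)).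
      rewrite rsum_zero; auto; lra. apply rsum_le. intros j _. destruct (j =? i)%nat; [lra|].
      pose proof (Rabs_pos (q i j)); pose proof (Rabs_pos (q j i)); lra. }
    destruct (fin_delta n (fun j h => Rabs (X (t+h) j - X t j) < eta / (Ci + 1))) as [d2 [Hd2 Hd2']].
    { intros j Hj. apply (deriv_cont (fun s => X s j) t _ (HX j Hj t)). apply Rdiv_lt_0_compat; lra. }
    exists (Rmin d1 d2). split. apply Rmin_glb_lt; [apply cond_pos|lra].
    intros h Hh. pose proof (Rmin_l d1 d2). pose proof (Rmin_r d1 d2). split.
    - intros Hh0. apply Hd1; auto; lra.
    - eapply Rle_lt_trans. apply Kf_diff.
      apply Rle_lt_trans with (Ci * (eta / (Ci + 1))).
      + unfold Ci at 1. rewrite <- rsum_ne_scal_r. apply rsum_ne_le. intros j Hj _.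
        pose proof (Hd2' h ltac:(lra) j Hj). pose proof (Hd2' h ltac:(lra) i Hi).
        pose proof (Rabs_pos (q i j)); pose proof (Rabs_pos (q j i)).
        set (a := eta / (Ci + 1)) in *.
        assert (Rabs (q i j) * Rabs (X (t + h) j - X t j) <= Rabs (q i j) * a) by (apply Rmult_le_compat_l; lra).
        assert (Rabs (q j i) * Rabs (X (t + h) i - X t i) <= Rabs (q j i) * a) by (apply Rmult_le_compat_l; lra).
        lra.
      + apply Rmult_lt_reg_r with (Ci + 1). lra. unfold Rdiv. rewrite (Rmult_assoc Ci), (Rmult_assoc eta), Rinv_l by lra. nra. }
  exists d. split; auto. intros s Hs.
  set (h := s - t). assert (Hh : 0 < h) by (unfold h; lra).
  replace s with (t + h) in * by (unfold h; ring).
  set (g := fun i => slaff p0 l (X (t+h) i / Ps i)).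
  assert (C1 : Phi n Ps p0 l (X (t+h)) - Phi n Ps p0 l (X t) <= rsum n (fun i => g i * (X (t+h) i - X t i))).
  { unfold Phi. rewrite <- rsum_minus. apply rsum_le. intros i Hi. specialize (HPs i Hi).
    pose proof (maxaff_subgrad p0 l (X (t+h) i / Ps i) (X t i / Ps i)).
    unfold g. replace (X (t+h) i - X t i) with (Ps i * (X (t+h) i / Ps i - X t i / Ps i)) by (field; lra).
    nra. }
  assert (C2 : rsum n (fun i => g i * Kf n q (X (t+h)) i) <= 0).
  { pose proof (lyap n Ps q (maxaff p0 l) (slaff p0 l) (fun i => X (t+h) i / Ps i) Hm HPs) as L.
    eapply Rle_trans; [|apply L]. right. apply rsum_ext. intros i Hi. unfold g, Kf. f_equal.
    apply rsum_ext_ne. intros j Hj _. pose proof (HPs i Hi); pose proof (HPs j Hj). field; lra.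
    intros u w; apply maxaff_subgrad. }
  assert (C3 : rsum n (fun i => g i * ((X (t+h) i - X t i)/h - Kf n q (X (t+h)) i)) <= INR n * (B * (2*eta))).
  { rewrite <- rsum_const. apply rsum_le. intros i Hi. destruct (Hd' h ltac:(rewrite Rabs_right; lra) i Hi) as [Ha Hb].
    specialize (Ha ltac:(lra)).
    pose proof (slaff_bnd p0 l (X (t+h) i / Ps i)). fold B in H. fold (g i) in H.
    set (w := (X (t + h) i - X t i) / h - Kf n q (X (t + h)) i).
    assert (Rabs w < 2 * eta).
    { unfold w. replace ((X (t + h) i - X t i) / h - Kf n q (X (t + h)) i) with
        (((X (t + h) i - X t i) / h - Kf n q (X t) i) - (Kf n q (X (t + h)) i - Kf n q (X t) i)) by ring.
      eapply Rle_lt_trans. apply Rabs_triang. rewrite Rabs_Ropp. lra. }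
    apply Rle_trans with (Rabs (g i * w)). apply Rle_abs. rewrite Rabs_mult.
    pose proof (Rabs_pos (g i)); pose proof (Rabs_pos w). nra. }
  assert (C4 : INR n * (B * (2*eta)) <= e).
  { unfold eta. replace (INR n * (B * (2 * (e / (2 * (B + 1) * (INR n + 1))))))
      with (e * ((INR n * B) / ((B+1) * (INR n + 1)))) by (field; lra).
    assert ((INR n * B) / ((B+1) * (INR n + 1)) <= 1).
    { apply Rmult_le_reg_r with ((B+1) * (INR n + 1)). nra. unfold Rdiv.
      rewrite Rmult_assoc, Rinv_l by nra. nra. }
    nra. }
  assert (E : rsum n (fun i => g i * ((X (t+h) i - X t i)/h - Kf n q (X (t+h)) i)) * h =
     rsum n (fun i => g i * (X (t+h) i - X t i)) - h * rsum n (fun i => g i * Kf n q (X (t+h)) i)).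
  { rewrite Rmult_comm, <- !rsum_scal, <- rsum_minus. apply rsum_ext. intros; field; lra. }
  replace (t + h - t) with h by ring. nra. Qed.


Lemma kol_mono n Ps q X p0 l : markov_chain n Ps q -> (forall i, (i<n)%nat -> 0 < Ps i) ->
  kolmogorov_solution n q X -> Phi n Ps p0 l (X 1) <= Phi n Ps p0 l (X 0).
Proof. intros Hm HPs HX.
  assert (Hall : forall e, e > 0 -> Phi n Ps p0 l (X 1) - e * 1 <= Phi n Ps p0 l (X 0) - e * 0).
  { intros e He. apply (creep (fun t => Phi n Ps p0 l (X t) - e * t)).
    - intros t _. destruct (right_step n Ps q X p0 l Hm HPs HX t e He) as [d [Hd Hd']].
      exists d; split; auto. intros s Hs. specialize (Hd' s Hs). lra.
    - intros t _ eta Heta. set (B := bnd p0 l). pose proof (bnd_nonneg p0 l). fold B in H.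
      pose proof (pos_INR n).
      set (eta' := eta / (2 * (B + 1) * (INR n + 1))).
      assert (Heta' : eta' > 0) by (unfold eta'; apply Rdiv_lt_0_compat; [lra|nra]).
      destruct (fin_delta n (fun i h => Rabs (X (t+h) i - X t i) < eta')) as [d [Hd Hd']].
      { intros i Hi. apply (deriv_cont (fun s => X s i) t _ (HX i Hi t)). lra. }
      exists (Rmin d (eta / (2 * (e + 1)))). split.
      { apply Rmin_glb_lt. lra. apply Rdiv_lt_0_compat; lra. }
      intros s Hs. pose proof (Rmin_l d (eta / (2 * (e + 1)))). pose proof (Rmin_r d (eta / (2 * (e + 1)))).
      replace s with (t + (s - t)) by ring.
      pose proof (Phi_lip n Ps p0 l (X (t + (s-t))) (X t) HPs) as L. fold B in L.
      assert (S1 : rsum n (fun i => Rabs (X (t + (s - t)) i - X t i)) <= INR n * eta').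
      { rewrite <- rsum_const. apply rsum_le. intros i Hi. left. apply Hd'; auto. lra. }
      assert (S2 : B * (INR n * eta') <= eta / 2).
      { unfold eta'. replace (B * (INR n * (eta / (2 * (B + 1) * (INR n + 1))))) with
          (eta / 2 * ((B * INR n) / ((B + 1) * (INR n + 1)))) by (field; lra).
        assert ((B * INR n) / ((B + 1) * (INR n + 1)) <= 1).
        { apply Rmult_le_reg_r with ((B+1) * (INR n + 1)). nra. unfold Rdiv.
          rewrite Rmult_assoc, Rinv_l by nra. nra. }
        nra. }
      assert (S3 : e * Rabs (s - t) < eta / 2).
      { assert (Rabs (s - t) < eta / (2 * (e+1))) by lra.
        apply Rle_lt_trans with ((e+1) * Rabs (s-t)). pose proof (Rabs_pos (s - t)); nra.
        apply Rmult_lt_reg_r with (/ (e+1)). apply Rinv_0_lt_compat; lra.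
        replace ((e + 1) * Rabs (s - t) * / (e + 1)) with (Rabs (s-t)) by (field; lra).
        replace (eta / 2 * / (e + 1)) with (eta / (2 * (e+1))) by (field; lra). lra. }
      replace (Phi n Ps p0 l (X (t + (s - t))) - e * (t + (s - t)) - (Phi n Ps p0 l (X t) - e * t))
        with ((Phi n Ps p0 l (X (t + (s - t))) - Phi n Ps p0 l (X t)) + (- (e * (s - t)))) by ring.
      eapply Rle_lt_trans. apply Rabs_triang. rewrite Rabs_Ropp, Rabs_mult, (Rabs_right e) by lra.
      assert (B * rsum n (fun i => Rabs (X (t + (s - t)) i - X t i)) <= B * (INR n * eta')) by (apply Rmult_le_compat_l; lra).
      lra. }
  apply Rnot_lt_le. intros Hlt. specialize (Hall ((Phi n Ps p0 l (X 1) - Phi n Ps p0 l (X 0))/2) ltac:(lra)). lra. Qed.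

Lemma step_mono n Ps a b p0 l : (forall i, (i<n)%nat -> 0 < Ps i) -> markov_step n Ps a b ->
  Phi n Ps p0 l b <= Phi n Ps p0 l a.
Proof. intros HPs [q [Hm [X [HX [H0 H1]]]]].
  pose proof (kol_mono n Ps q X p0 l Hm HPs HX).
  unfold Phi in *. rewrite (rsum_ext n _ (fun i => Ps i * maxaff p0 l (X 1 i / Ps i))).
  rewrite (rsum_ext n (fun i => Ps i * maxaff p0 l (a i / Ps i)) (fun i => Ps i * maxaff p0 l (X 0 i / Ps i))). auto.
  intros i Hi; rewrite H0; auto. intros i Hi; rewrite H1; auto. Qed.

Lemma Phi_cv n Ps p0 l (a : nat -> nat -> R) x : (forall i, (i<n)%nat -> 0 < Ps i) ->
  (forall i, (i<n)%nat -> Un_cv (fun k => a k i) (x i)) -> Un_cv (fun k => Phi n Ps p0 l (a k)) (Phi n Ps p0 l x).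
Proof. intros HPs Hc. unfold Phi. apply rsum_cv. intros i Hi. intros e He.
  set (B := bnd p0 l). pose proof (bnd_nonneg p0 l). fold B in H.
  destruct (Hc i Hi (e / (B + 1))) as [N HN]. apply Rdiv_lt_0_compat; lra.
  exists N. intros k Hk. specialize (HN k Hk). unfold R_dist in *. specialize (HPs i Hi).
  replace (Ps i * maxaff p0 l (a k i / Ps i) - Ps i * maxaff p0 l (x i / Ps i)) with
    (Ps i * (maxaff p0 l (a k i / Ps i) - maxaff p0 l (x i / Ps i))) by ring.
  rewrite Rabs_mult, (Rabs_right (Ps i)) by lra.
  pose proof (maxaff_lip p0 l (a k i / Ps i) (x i / Ps i)) as L. fold B in L.
  replace (a k i / Ps i - x i / Ps i) with ((a k i - x i) / Ps i) in L by (field; lra).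
  unfold Rdiv in L. rewrite Rabs_mult, (Rabs_right (/ Ps i)) in L by (left; apply Rinv_0_lt_compat; lra).
  assert (Ps i * Rabs (maxaff p0 l (a k i / Ps i) - maxaff p0 l (x i / Ps i)) <= B * Rabs (a k i - x i)).
  { apply Rle_trans with (Ps i * (B * (Rabs (a k i - x i) * / Ps i))). apply Rmult_le_compat_l; lra.
    right. field. lra. }
  apply Rle_lt_trans with (B * Rabs (a k i - x i)); auto.
  apply Rle_lt_trans with ((B+1) * Rabs (a k i - x i)). pose proof (Rabs_pos (a k i - x i)); nra.
  apply Rmult_lt_reg_r with (/ (B+1)). apply Rinv_0_lt_compat; lra.
  replace ((B + 1) * Rabs (a k i - x i) * / (B + 1)) with (Rabs (a k i - x i)) by (field; lra).
  unfold Rdiv in HN. lra. Qed.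

Lemma order_mono n Ps P0 P1 : (forall i, (i<n)%nat -> 0 < Ps i) -> markov_order n Ps P0 P1 ->
  forall p0 l, Phi n Ps p0 l P1 <= Phi n Ps p0 l P0.
Proof. intros HPs [_ [_ H]]. apply (H (fun a b => forall p0 l, Phi n Ps p0 l b <= Phi n Ps p0 l a)).
  - intros a b _ _ Hs p0 l. apply step_mono; auto.
  - intros a b c H1 H2 p0 l. specialize (H1 p0 l). specialize (H2 p0 l). lra.
  - intros a b x y Hab Ha Hb _ _ p0 l.
    apply Rle_cv_lim with (Un := fun k => Phi n Ps p0 l (b k)) (Vn := fun k => Phi n Ps p0 l (a k)). intros k; apply Hab.
    apply Phi_cv; auto. apply Phi_cv; auto. Qed.


Lemma div_le a p c q : 0 < p -> 0 < q -> a * q <= c * p -> a / p <= c / q.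
Proof. intros Hp Hq H. replace (a / p) with ((a * q) * / (p * q)) by (field; lra).
  replace (c / q) with ((c * p) * / (p * q)) by (field; lra).
  apply Rmult_le_compat_r. left; apply Rinv_0_lt_compat; nra. auto. Qed.

Lemma three_chord h w z u : strictly_convex_pos h -> 0 < w -> w < z -> z < u ->
  (h z - h w) / (z - w) <= (h u - h z) / (u - z).
Proof. intros Hc Hw Hwz Hzu.
  set (lam := (u - z) / (u - w)).
  assert (Hl : 0 < lam < 1) by (unfold lam; split; [apply Rdiv_lt_0_compat; lra| apply Rmult_lt_reg_r with (u - w); [lra|]; unfold Rdiv; rewrite Rmult_assoc, Rinv_l; lra]).
  specialize (Hc w u lam Hw ltac:(lra) ltac:(lra) Hl).
  assert (Heq : lam * w + (1 - lam) * u = z) by (unfold lam; field; try lra).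
  rewrite Heq in Hc.
  assert (H2 : h z * (u - w) < (u - z) * h w + (z - w) * h u).
  { replace (u - z) with (lam * (u - w)) by (unfold lam; field; try lra).
    replace (z - w) with ((1 - lam) * (u - w)) by (unfold lam; field; try lra). nra. }
  apply div_le; try lra. Qed.

Lemma subgrad_exists h z : strictly_convex_pos h -> 0 < z ->
  exists g, forall w, 0 < w -> h w >= h z + g * (w - z).
Proof. intros Hc Hz.
  set (E := fun s => exists w, 0 < w < z /\ s = (h z - h w) / (z - w)).
  assert (Hub : forall u, z < u -> forall s, E s -> s <= (h u - h z) / (u - z)).
  { intros u Hu s [w [Hw ->]]. apply three_chord; auto; lra. }
  assert (Hb : bound E) by (exists ((h (z+1) - h z) / (z + 1 - z)); intros s Hs; apply (Hub (z+1)); auto; lra).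
  assert (Hne : exists s, E s) by (exists ((h z - h (z/2)) / (z - z/2)); exists (z/2); split; [lra|auto]).
  destruct (completeness E Hb Hne) as [g [Hg1 Hg2]].
  exists g. intros w Hw. destruct (Rtotal_order w z) as [Hlt|[Heq|Hgt]].
  - assert ((h z - h w) / (z - w) <= g) by (apply Hg1; exists w; split; [lra|auto]).
    assert (h z - h w <= g * (z - w)).
    { replace (h z - h w) with ((h z - h w) / (z - w) * (z - w)) by (field; lra).
      apply Rmult_le_compat_r; lra. }
    lra.
  - subst; lra.
  - assert (g <= (h w - h z) / (w - z)) by (apply Hg2; intros s Hs; apply Hub; auto).
    assert (g * (w - z) <= h w - h z).
    { replace (h w - h z) with ((h w - h z) / (w - z) * (w - z)) by (field; lra).
      apply Rmult_le_compat_r; lra. }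
    lra. Qed.

Lemma f_div_mono n Ps P0 P1 h : (forall i, (i<n)%nat -> 0 < Ps i) ->
  in_pos_simplex n P0 -> in_pos_simplex n P1 ->
  markov_order n Ps P0 P1 -> strictly_convex_pos h -> f_div n h P1 Ps <= f_div n h P0 Ps.
Proof. intros HPs [H0 _] [H1 _] HM Hc.
  destruct (functional_choice (fun z g => 0 < z -> forall w, 0 < w -> h w >= h z + g * (w - z))) as [G HG].
  { intros z. destruct (Rlt_dec 0 z). destruct (subgrad_exists h z Hc r) as [g Hg]. exists g; auto.
    exists 0; intros; lra. }
  set (piece := fun z => (h z - G z * z, G z)).
  set (x := fun i => P0 i / Ps i). set (x' := fun i => P1 i / Ps i).
  set (l := map (fun i => piece (x i)) (seq 0 n) ++ map (fun i => piece (x' i)) (seq 0 n)).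
  set (p0 := piece 1).
  assert (Hpieces : forall p, In p (p0 :: l) -> exists z, 0 < z /\ p = piece z).
  { intros p [Hp|Hp]. exists 1; split; [lra|auto].
    unfold l in Hp. apply in_app_or in Hp. destruct Hp as [Hp|Hp]; apply in_map_iff in Hp;
    destruct Hp as [i [<- Hi]]; apply in_seq in Hi.
    exists (x i); split; auto. unfold x. apply Rdiv_lt_0_compat; [apply H0|apply HPs]; lia.
    exists (x' i); split; auto. unfold x'. apply Rdiv_lt_0_compat; [apply H1|apply HPs]; lia. }
  assert (Hval : forall y, 0 < y -> (exists z, In (piece z) l /\ z = y) -> maxaff p0 l y = h y).
  { intros y Hy [z [Hz Hzy]]. subst y. apply maxaff_eq.
    - intros p Hp. destruct (Hpieces p Hp) as [z' [Hz' ->]]. unfold piece; simpl.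
      specialize (HG z' Hz' z Hy). lra.
    - exists (piece z). split. right; auto. unfold piece; simpl; ring. }
  pose proof (order_mono n Ps P0 P1 HPs HM p0 l) as M. unfold Phi in M. unfold f_div.
  rewrite (rsum_ext n (fun i => Ps i * h (P1 i / Ps i)) (fun i => Ps i * maxaff p0 l (P1 i / Ps i))).
  rewrite (rsum_ext n (fun i => Ps i * h (P0 i / Ps i)) (fun i => Ps i * maxaff p0 l (P0 i / Ps i))). auto.
  - intros i Hi. rewrite Hval; auto. apply Rdiv_lt_0_compat; auto.
    exists (x i). split; auto. unfold l. apply in_or_app; left. apply in_map_iff. exists i; split; auto. apply in_seq; lia.
  - intros i Hi. rewrite Hval; auto. apply Rdiv_lt_0_compat; auto.
    exists (x' i). split; auto. unfold l. apply in_or_app; right. apply in_map_iff. exists i; split; auto. apply in_seq; lia. Qed.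


Definition upcl (n : nat) (x : nat -> R) (S : nat -> bool) : Prop :=
  forall i j, (i<n)%nat -> (j<n)%nat -> S i = true -> x i < x j -> S j = true.
Definition ssum (n : nat) (S : nat -> bool) (v : nat -> R) : R := rsum n (fun i => if S i then v i else 0).

Lemma argmax n (P : nat -> Prop) (f : nat -> R) : (exists k, (k<n)%nat /\ P k) ->
  exists i, (i<n)%nat /\ P i /\ forall k, (k<n)%nat -> P k -> f k <= f i.
Proof. induction n; intros [k [Hk HP]]; [lia|].
  destruct (classic (exists k, (k<n)%nat /\ P k)) as [Hex|Hno].
  - destruct (IHn Hex) as [i [Hi [HPi Hmax]]].
    destruct (classic (P n /\ f i < f n)) as [[HPn Hlt]|Hn].
    + exists n. split; [lia|split; auto]. intros k' Hk' HPk'. destruct (Nat.eq_dec k' n) as [->|]; [lra|].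
      specialize (Hmax k' ltac:(lia) HPk'). lra.
    + exists i. split; [lia|split; auto]. intros k' Hk' HPk'. destruct (Nat.eq_dec k' n) as [->|].
      apply Rnot_lt_le. intros Hl. apply Hn; auto. apply Hmax; auto; lia.
  - assert (k = n). { destruct (Nat.eq_dec k n); auto. exfalso; apply Hno; exists k; split; auto; lia. }
    subst. exists n. split; [lia|split; auto]. intros k' Hk' HPk'. destruct (Nat.eq_dec k' n) as [->|]; [lra|].
    exfalso; apply Hno; exists k'; split; auto; lia. Qed.

Lemma argmin n (P : nat -> Prop) (f : nat -> R) : (exists k, (k<n)%nat /\ P k) ->
  exists i, (i<n)%nat /\ P i /\ forall k, (k<n)%nat -> P k -> f i <= f k.
Proof. intros H. destruct (argmax n P (fun k => - f k) H) as [i [Hi [HP Hm]]].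
  exists i; split; auto; split; auto. intros k Hk HPk. specialize (Hm k Hk HPk). lra. Qed.

Lemma sc_hinge t e : e > 0 -> strictly_convex_pos (fun y => Rmax 0 (y - t) + e * (y * y)).
Proof. intros He x y l Hx Hy Hxy Hl.
  assert (H1 : Rmax 0 (l * x + (1 - l) * y - t) <= l * Rmax 0 (x - t) + (1 - l) * Rmax 0 (y - t)).
  { pose proof (Rmax_l 0 (x - t)). pose proof (Rmax_r 0 (x - t)).
    pose proof (Rmax_l 0 (y - t)). pose proof (Rmax_r 0 (y - t)).
    apply Rmax_lub; nra. }
  assert (H2 : (l * x + (1 - l) * y) * (l * x + (1 - l) * y) < l * (x * x) + (1 - l) * (y * y)).
  { assert (0 < (x - y) * (x - y)) by (assert (x - y <> 0) by lra; nra).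
    assert (0 < l * (1 - l)) by nra. nra. }
  nra. Qed.

Lemma neg_witness n f : rsum n f < 0 -> exists j, (j<n)%nat /\ f j < 0.
Proof. intros H. apply NNPP. intros Hn. assert (rsum n (fun _ => 0) <= rsum n f).
  apply rsum_le. intros i Hi. apply Rnot_lt_le. intros Hl. apply Hn; eauto.
  rewrite rsum_zero in H0; auto. lra. Qed.

Lemma lim_le a b c1 c2 : (forall e, e > 0 -> a + e * c1 < b + e * c2) -> a <= b.
Proof. intros H. apply Rnot_lt_le. intros Hlt.
  set (e := (a - b) / (Rabs (c2 - c1) + 1)). pose proof (Rabs_pos (c2 - c1)).
  assert (He : e > 0) by (unfold e; apply Rdiv_lt_0_compat; lra).
  specialize (H e He).
  assert (e * (c2 - c1) <= e * Rabs (c2 - c1)) by (apply Rmult_le_compat_l; [lra|apply Rle_abs]).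
  assert (e * Rabs (c2 - c1) < a - b).
  { unfold e. replace ((a - b) / (Rabs (c2 - c1) + 1) * Rabs (c2 - c1)) with ((a - b) * (Rabs (c2 - c1) / (Rabs (c2 - c1) + 1))) by (field; lra).
    assert (Rabs (c2 - c1) / (Rabs (c2 - c1) + 1) < 1).
    { apply Rmult_lt_reg_r with (Rabs (c2 - c1) + 1). lra. unfold Rdiv. rewrite Rmult_assoc, Rinv_l by lra. lra. }
    nra. }
  lra. Qed.

Lemma cut_from_H n Ps P0 P1 S : (forall i, (i<n)%nat -> 0 < Ps i) -> H_order n Ps P0 P1 ->
  upcl n (fun i => P0 i / Ps i) S -> ssum n S (fun i => P1 i - P0 i) <= 0.
Proof. intros HPs HH Hup.
  destruct (classic (exists k, (k<n)%nat /\ S k = true)) as [Hex|Hno].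
  2:{ unfold ssum. rewrite rsum_zero. lra. intros i Hi. destruct (S i) eqn:E; auto. exfalso; apply Hno; eauto. }
  destruct (argmin n (fun k => S k = true) (fun i => P0 i / Ps i) Hex) as [k [Hk [HSk Hmin]]].
  set (t := P0 k / Ps k).
  set (A := fun P => rsum n (fun i => Ps i * Rmax 0 (P i / Ps i - t))).
  set (C := fun P : nat -> R => rsum n (fun i => Ps i * ((P i / Ps i) * (P i / Ps i)))).
  assert (HA : A P1 <= A P0).
  { assert (Hc : forall e, e > 0 -> A P1 + e * C P1 < A P0 + e * C P0).
    { intros e He. specialize (HH _ (sc_hinge t e He)). unfold f_div in HH.
      unfold A, C. rewrite <- !rsum_scal, <- !rsum_plus.
      eapply Rlt_le_trans. eapply Rle_lt_trans; [|apply HH]. right. apply rsum_ext; intros; ring.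
      right. apply rsum_ext; intros; ring. }
    apply (lim_le _ _ _ _ Hc). }
  assert (E1 : ssum n S P1 - rsum n (fun i => if S i then t * Ps i else 0) <= A P1).
  { unfold ssum, A. rewrite <- rsum_minus. apply rsum_le. intros i Hi. specialize (HPs i Hi).
    pose proof (Rmax_l 0 (P1 i / Ps i - t)). pose proof (Rmax_r 0 (P1 i / Ps i - t)).
    destruct (S i).
    - replace (P1 i - t * Ps i) with (Ps i * (P1 i / Ps i - t)) by (field; lra). apply Rmult_le_compat_l; lra.
    - assert (0 <= Ps i * Rmax 0 (P1 i / Ps i - t)) by (apply Rmult_le_pos; lra). lra. }
  assert (E2 : ssum n S P0 - rsum n (fun i => if S i then t * Ps i else 0) = A P0).
  { unfold ssum, A. rewrite <- rsum_minus. apply rsum_ext. intros i Hi. specialize (HPs i Hi).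
    destruct (S i) eqn:ES.
    - specialize (Hmin i Hi ES). rewrite Rmax_right by (unfold t in *; lra). field. lra.
    - assert (P0 i / Ps i <= t). { apply Rnot_lt_le. intros Hl. rewrite (Hup k i Hk Hi HSk Hl) in ES. discriminate. }
      rewrite Rmax_left by lra. ring. }
  unfold ssum in *. rewrite (rsum_ext n _ (fun i => (if S i then P1 i else 0) - (if S i then P0 i else 0))).
  rewrite rsum_minus. lra. intros i _; destruct (S i); ring. Qed.


Fixpoint mv (l : list (nat*nat*R)) (k : nat) : R :=
  match l with nil => 0
  | (i,j,d) :: l' => (if Nat.eqb k i then d else 0) - (if Nat.eqb k j then d else 0) + mv l' k end.

Fixpoint validl (n : nat) (x : nat -> R) (l : list (nat*nat*R)) : Prop :=
  match l with nil => True
  | (i,j,d) :: l' => (i<n)%nat /\ (j<n)%nat /\ i <> j /\ 0 < d /\ x i < x j /\ validl n x l' end.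

Fixpoint cnt (n : nat) (v : nat -> R) : nat :=
  match n with O => O | S m => (cnt m v + (if Req_EM_T (v m) 0 then 0 else 1))%nat end.

Lemma cnt_le n v v' : (forall k, (k<n)%nat -> v k = 0 -> v' k = 0) -> (cnt n v' <= cnt n v)%nat.
Proof. induction n; simpl; intros H; auto.
  specialize (IHn ltac:(intros; apply H; auto; lia)).
  destruct (Req_EM_T (v n) 0); destruct (Req_EM_T (v' n) 0); try lia.
  exfalso. apply n0. apply H; auto. Qed.

Lemma cnt_lt n v v' : (forall k, (k<n)%nat -> v k = 0 -> v' k = 0) ->
  (exists k, (k<n)%nat /\ v k <> 0 /\ v' k = 0) -> (cnt n v' < cnt n v)%nat.
Proof. induction n; simpl; intros H [k [Hk [Hv Hv']]]; [lia|].
  destruct (Nat.eq_dec k n) as [->|Hne].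
  - pose proof (cnt_le n v v' ltac:(intros; apply H; auto; lia)).
    destruct (Req_EM_T (v n) 0); [contradiction|]. destruct (Req_EM_T (v' n) 0); [|contradiction]. lia.
  - specialize (IHn ltac:(intros; apply H; auto; lia) ltac:(exists k; repeat split; auto; lia)).
    destruct (Req_EM_T (v n) 0); destruct (Req_EM_T (v' n) 0); try lia.
    exfalso. apply n0. apply H; auto. Qed.

Lemma cnt_pos n v : (exists k, (k<n)%nat /\ v k <> 0) -> (0 < cnt n v)%nat.
Proof. intros H. apply Nat.le_lt_trans with (cnt n (fun _ => 0)).
  lia. apply cnt_lt. auto. destruct H as [k [Hk Hv]]. exists k; auto. Qed.

Lemma greedy n x : forall N v, (cnt n v <= N)%nat -> rsum n v = 0 ->
  (forall S, upcl n x S -> ssum n S v <= 0) ->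
  exists l, validl n x l /\ forall k, (k<n)%nat -> v k = mv l k.
Proof. induction N; intros v Hc Hs Hcut;
  (destruct (classic (exists k, (k<n)%nat /\ v k <> 0)) as [Hnz|Hz];
   [|exists nil; split; [simpl; auto| intros k Hk; simpl; apply NNPP; intros Hn; apply Hz; eauto]]).
  - pose proof (cnt_pos n v Hnz). lia.
  -
    assert (Hpos : exists k, (k<n)%nat /\ v k > 0).
    { apply NNPP. intros Hn. assert (Hlt0 : rsum n v < rsum n (fun _ => 0)).
      { apply rsum_lt. intros i Hi. apply Rnot_lt_le. intros Hl. apply Hn; eauto.
        destruct Hnz as [k [Hk Hv]]. exists k. split; auto.
        destruct (Rtotal_order (v k) 0) as [|[|Hg]]; auto; [contradiction|]. exfalso; apply Hn; eauto. }
      rewrite (rsum_zero n (fun _ => 0)) in Hlt0 by auto. lra. }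
    destruct (argmax n (fun k => v k > 0) x Hpos) as [i [Hi [Hvi Hmax]]].
    set (S1 := fun k => if Rlt_dec (x i) (x k) then true else false).
    set (S0 := fun k => if Rlt_dec (x i) (x k) then true else Nat.eqb k i).
    assert (HS0 : upcl n x S0).
    { intros a b Ha Hb HSa Hab. unfold S0 in *. destruct (Rlt_dec (x i) (x a)).
      destruct (Rlt_dec (x i) (x b)); auto. exfalso; lra.
      apply Nat.eqb_eq in HSa. subst. destruct (Rlt_dec (x i) (x b)); auto. }
    assert (E0 : ssum n S0 v = ssum n S1 v + v i).
    { unfold ssum. rewrite <- (rsum_delta n i (v i)) by auto. rewrite <- rsum_plus.
      apply rsum_ext. intros k Hk. unfold S0, S1. destruct (Rlt_dec (x i) (x k)).
      - destruct (Nat.eqb_spec k i). subst; lra. lra.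
      - destruct (Nat.eqb_spec k i). subst; lra. lra. }
    pose proof (Hcut S0 HS0) as C0.
    destruct (neg_witness n (fun k => if S1 k then v k else 0) ltac:(unfold ssum in *; lra)) as [j [Hj Hvj]].
    assert (HS1j : S1 j = true /\ v j < 0) by (destruct (S1 j); [split; auto|lra]).
    destruct HS1j as [HS1j Hvj'].
    assert (Hxij : x i < x j) by (unfold S1 in HS1j; destruct (Rlt_dec (x i) (x j)); [auto|discriminate]).
    assert (Hij : i <> j) by (intros ->; lra).
    set (d := Rmin (v i) (- v j)).
    assert (Hd : 0 < d) by (unfold d; apply Rmin_glb_lt; lra).
    assert (Hd1 : d <= v i) by apply Rmin_l. assert (Hd2 : d <= - v j) by apply Rmin_r.
    set (v' := fun k => v k - (if Nat.eqb k i then d else 0) + (if Nat.eqb k j then d else 0)).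
    assert (Hs' : rsum n v' = 0).
    { unfold v'. rewrite rsum_plus, rsum_minus, !rsum_delta by auto. lra. }
    assert (Hcut' : forall S, upcl n x S -> ssum n S v' <= 0).
    { intros S HS.
      assert (E : ssum n S v' = ssum n S v - (if S i then d else 0) + (if S j then d else 0)).
      { unfold ssum. rewrite <- (rsum_delta n i (if S i then d else 0)) by auto.
        rewrite <- (rsum_delta n j (if S j then d else 0)) by auto.
        rewrite <- rsum_minus, <- rsum_plus. apply rsum_ext. intros k Hk. unfold v'.
        destruct (Nat.eqb_spec k i); destruct (Nat.eqb_spec k j); subst; try lia; destruct (S _); ring. }
      rewrite E. pose proof (Hcut S HS).
      destruct (S j) eqn:ESj; [|destruct (S i); lra].
      destruct (S i) eqn:ESi; [lra|].
      destruct (classic (exists k, (k<n)%nat /\ S k = true /\ x k <= x i)) as [[k [Hk [HSk Hxk]]]|Hno].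
      - assert (Hxk' : x k = x i).
        { destruct (Rle_lt_or_eq_dec _ _ Hxk) as [Hl|]; auto. rewrite (HS k i Hk Hi HSk Hl) in ESi. discriminate. }
        set (S' := fun m => orb (S m) (Nat.eqb m i)).
        assert (HS' : upcl n x S').
        { intros a b Ha Hb HSa Hab. unfold S' in *. apply orb_true_iff in HSa. apply orb_true_iff. left.
          destruct HSa as [HSa|HSa]. apply (HS a b Ha Hb HSa Hab). apply Nat.eqb_eq in HSa; subst.
          apply (HS k b Hk Hb HSk). lra. }
        pose proof (Hcut S' HS').
        assert (ssum n S' v = ssum n S v + v i).
        { unfold ssum. rewrite <- (rsum_delta n i (v i)) by auto. rewrite <- rsum_plus.
          apply rsum_ext. intros m Hm. unfold S'. destruct (Nat.eqb_spec m i). subst. rewrite ESi; simpl; ring.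
          rewrite orb_false_r. destruct (S m); ring. }
        lra.
      - assert (ssum n S v <= v j).
        { unfold ssum. rewrite <- (rsum_delta n j (v j)) by auto. apply rsum_le. intros m Hm.
          destruct (Nat.eqb_spec m j). subst. rewrite ESj. lra.
          destruct (S m) eqn:ESm; [|lra]. apply Rnot_lt_le. intros Hl.
          apply Hno. exists m. repeat split; auto; apply Hmax; auto. }
        lra. }
    assert (Hcnt : (cnt n v' < cnt n v)%nat).
    { apply cnt_lt.
      - intros k Hk Hvk. unfold v'. destruct (Nat.eqb_spec k i). subst; lra. destruct (Nat.eqb_spec k j). subst; lra. lra.
      - unfold d in v'. unfold Rmin in v'. destruct (Rle_dec (v i) (- v j)).
        + exists i. repeat split; auto; try lra. unfold v'. rewrite Nat.eqb_refl.
          destruct (Nat.eqb_spec i j); [contradiction|]. ring.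
        + exists j. repeat split; auto; try lra. unfold v'. rewrite Nat.eqb_refl.
          destruct (Nat.eqb_spec j i); [subst; contradiction|]. ring. }
    destruct (IHN v' ltac:(lia) Hs' Hcut') as [l [Hl Hlv]].
    exists ((i,j,d) :: l). split. simpl. repeat split; auto.
    intros k Hk. simpl. rewrite <- Hlv by auto. unfold v'. ring. Qed.


Module DX.
Import Coquelicot.Coquelicot.
Lemma dexp a b k t : derivable_pt_lim (fun s => a + b * (1 - exp (- k * s))) t (b * k * exp (- k * t)).
Proof. apply is_derive_Reals. auto_derive. auto. ring. Qed.
End DX.

Lemma rsum_two n f i j : (i<n)%nat -> (j<n)%nat -> i <> j -> (forall k, (k<n)%nat -> 0 <= f k) -> f i + f j <= rsum n f.
Proof. intros Hi Hj Hij Hf. rewrite <- (rsum_delta n i (f i)) by auto. rewrite <- (rsum_delta n j (f j)) by auto.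
  rewrite <- rsum_plus. apply rsum_le. intros k Hk. specialize (Hf k Hk).
  destruct (Nat.eqb_spec k i); destruct (Nat.eqb_spec k j); subst; try lia; lra. Qed.

Lemma rsum_one n f i : (i<n)%nat -> (forall k, (k<n)%nat -> 0 <= f k) -> f i <= rsum n f.
Proof. intros Hi Hf. rewrite <- (rsum_delta n i (f i)) by auto. apply rsum_le. intros k Hk. specialize (Hf k Hk).
  destruct (Nat.eqb_spec k i); subst; lra. Qed.

Lemma step_refl n Ps P : markov_step n Ps P P.
Proof. exists (fun _ _ => 0). split. split. intros; lra. intros i Hi. unfold rsum_ne.
  rewrite !rsum_zero; auto; try lra; intros; destruct (_ =? _)%nat; lra.
  exists (fun _ => P). split; [|split; intros ? ?; auto].
  intros i Hi t. replace (rsum_ne n i (fun j => 0 * P j - 0 * P i)) with 0.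
  apply derivable_pt_lim_const. unfold rsum_ne. rewrite rsum_zero; auto. intros; destruct (_ =? _)%nat; lra. Qed.

Lemma step_order n Ps a b : in_pos_simplex n a -> in_pos_simplex n b -> markov_step n Ps a b -> markov_order n Ps a b.
Proof. intros Ha Hb Hs. split; [auto|split; [auto|]]. intros Rl H _ _. apply H; auto. Qed.

Lemma order_trans n Ps a b c : markov_order n Ps a b -> markov_order n Ps b c -> markov_order n Ps a c.
Proof. intros [Ha [_ H1]] [_ [Hc H2]]. split; [auto|split; [auto|]]. intros Rl Hs Ht Hcl.
  apply (Ht a b c). apply H1; auto. apply H2; auto. Qed.

Definition shift (P : nat -> R) i j d : nat -> R :=
  fun k => P k + ((if Nat.eqb k i then d else 0) - (if Nat.eqb k j then d else 0)).

Lemma two_state n Ps P i j d : (forall k, (k<n)%nat -> 0 < Ps k) -> in_pos_simplex n P ->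
  (i<n)%nat -> (j<n)%nat -> i <> j -> 0 < d -> d * (Ps i + Ps j) < Ps i * P j - Ps j * P i ->
  markov_step n Ps P (shift P i j d) /\ in_pos_simplex n (shift P i j d).
Proof. intros HPs [HP HP1] Hi Hj Hij Hd Hlt.
  pose proof (HPs i Hi) as Hpi. pose proof (HPs j Hj) as Hpj.
  pose proof (HP i Hi) as HPi. pose proof (HP j Hj) as HPj.
  set (sig := Ps i + Ps j) in *. set (D0 := Ps i * P j - Ps j * P i) in *.
  assert (Hsig0 : 0 < sig) by (unfold sig; lra).
  assert (HD0 : 0 < D0) by (assert (0 < d * sig) by (apply Rmult_lt_0_compat; lra); lra).
  set (th := d * sig / D0).
  assert (Hth : 0 < th < 1).
  { unfold th. split. apply Rdiv_lt_0_compat; unfold sig; nra.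
    apply Rmult_lt_reg_r with D0; auto. unfold Rdiv. rewrite Rmult_assoc, Rinv_l by lra. lra. }
  set (kap := - ln (1 - th)).
  assert (Hkap : 0 < kap). { unfold kap. assert (ln (1 - th) < 0). rewrite <- ln_1. apply ln_increasing; lra. lra. }
  set (c := kap / sig). set (A := D0 / sig).
  assert (Hsig : 0 < sig) by (unfold sig; lra).
  assert (Hc : 0 < c) by (unfold c; apply Rdiv_lt_0_compat; lra).
  set (q := fun a b => if andb (Nat.eqb a i) (Nat.eqb b j) then c * Ps i
                       else if andb (Nat.eqb a j) (Nat.eqb b i) then c * Ps j else 0).
  set (X := fun t k => if Nat.eqb k i then P i + A * (1 - exp (- kap * t))
                       else if Nat.eqb k j then P j + (- A) * (1 - exp (- kap * t)) else P k).
  assert (Hqij : q i j = c * Ps i) by (unfold q; rewrite !Nat.eqb_refl; reflexivity).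
  assert (Hqji : q j i = c * Ps j).
  { unfold q. rewrite !Nat.eqb_refl. destruct (Nat.eqb_spec j i); [lia|]. reflexivity. }
  assert (Hq0 : forall a b, ~ (a = i /\ b = j) -> ~ (a = j /\ b = i) -> q a b = 0).
  { intros a b H1 H2. unfold q. destruct (Nat.eqb_spec a i); destruct (Nat.eqb_spec b j); simpl;
    destruct (Nat.eqb_spec a j); destruct (Nat.eqb_spec b i); simpl; subst; tauto. }
  assert (HX1 : forall k, X 1 k = shift P i j d k).
  { intros k. unfold X, shift. replace (exp (- kap * 1)) with (1 - th).
    2:{ unfold kap. replace (- - ln (1 - th) * 1) with (ln (1 - th)) by ring. rewrite exp_ln; lra. }
    assert (HA : A * (1 - (1 - th)) = d) by (unfold A, th; field; lra).
    destruct (Nat.eqb_spec k i); destruct (Nat.eqb_spec k j); try subst k; try lia; lra. }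
  split.
  - exists q. split. split.
    + intros a b _ _ _. unfold q. destruct (_ && _); [nra|]. destruct (_ && _); [nra|lra].
    + intros a Ha. destruct (Nat.eq_dec a i) as [->|Hai].
      * assert (L : rsum_ne n i (fun b => q i b * Ps b) = c * Ps i * Ps j).
        { apply (rsum_ne_single n i j); auto. intros k _ Hk1 Hk2. rewrite Hq0; [ring|lia|lia]. rewrite Hqij; ring. }
        assert (R : rsum_ne n i (fun b => q b i) = c * Ps j).
        { apply (rsum_ne_single n i j); auto. intros k _ Hk1 Hk2. apply Hq0; lia. }
        rewrite L, R; ring.
      * destruct (Nat.eq_dec a j) as [->|Haj].
        -- assert (L : rsum_ne n j (fun b => q j b * Ps b) = c * Ps j * Ps i).
           { apply (rsum_ne_single n j i); auto. intros k _ Hk1 Hk2. rewrite Hq0; [ring|lia|lia]. rewrite Hqji; ring. }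
           assert (R : rsum_ne n j (fun b => q b j) = c * Ps i).
           { apply (rsum_ne_single n j i); auto. intros k _ Hk1 Hk2. apply Hq0; lia. }
           rewrite L, R; ring.
        -- unfold rsum_ne. rewrite !rsum_zero; auto. lra.
           intros k _. destruct (_ =? _)%nat; auto. apply Hq0; lia.
           intros k _. destruct (_ =? _)%nat; auto. rewrite Hq0; [ring|lia|lia].
    + exists X. split; [|split].
      * intros k Hk t. destruct (Nat.eq_dec k i) as [->|Hki].
        -- rewrite (rsum_ne_single n i j (c * D0 * exp (- kap * t))); auto.
           replace (fun s => X s i) with (fun s => P i + A * (1 - exp (- kap * s))).
           2:{ apply functional_extensionality; intros s. unfold X. rewrite Nat.eqb_refl. auto. }
           replace (c * D0 * exp (- kap * t)) with (A * kap * exp (- kap * t)) by (unfold A, c; field; lra).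
           apply DX.dexp.
           intros k _ Hk1 Hk2. rewrite !Hq0 by lia. ring.
           rewrite Hqij, Hqji. unfold X. rewrite Nat.eqb_refl. destruct (Nat.eqb_spec j i); [lia|].
           rewrite ?Nat.eqb_refl. unfold A. unfold sig in *. unfold D0. field. lra.
        -- destruct (Nat.eq_dec k j) as [->|Hkj].
           ++ rewrite (rsum_ne_single n j i (- c * D0 * exp (- kap * t))); auto.
              replace (fun s => X s j) with (fun s => P j + (- A) * (1 - exp (- kap * s))).
              2:{ apply functional_extensionality; intros s. unfold X. rewrite Nat.eqb_refl.
                  destruct (Nat.eqb_spec j i); [lia|]. auto. }
              replace (- c * D0 * exp (- kap * t)) with (- A * kap * exp (- kap * t)) by (unfold A, c; field; lra).
              apply DX.dexp.
              intros k _ Hk1 Hk2. rewrite !Hq0 by lia. ring.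
              rewrite Hqij, Hqji. unfold X. rewrite Nat.eqb_refl. destruct (Nat.eqb_spec j i); [lia|].
              rewrite ?Nat.eqb_refl. unfold A. unfold sig in *. unfold D0. field. lra.
           ++ replace (rsum_ne n k (fun b => q k b * X t b - q b k * X t k)) with 0.
              replace (fun s => X s k) with (fun s : R => P k).
              apply derivable_pt_lim_const.
              apply functional_extensionality; intros s. unfold X.
              destruct (Nat.eqb_spec k i); [lia|]. destruct (Nat.eqb_spec k j); [lia|]. auto.
              unfold rsum_ne. rewrite rsum_zero; auto. intros b _. destruct (_ =? _)%nat; auto.
              rewrite !Hq0 by lia. ring.
      * intros k _. unfold X. rewrite Rmult_0_r, exp_0.
        destruct (Nat.eqb_spec k i); destruct (Nat.eqb_spec k j); subst; lra.
      * intros k _. apply HX1.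
  - split.
    + intros k Hk. unfold shift. specialize (HP k Hk).
      assert (d < P j). { assert (Ps j * P i > 0) by nra. assert (Ps j * P j > 0) by nra. assert (Hm : (d - P j) * sig < 0) by (unfold D0 in Hlt; unfold sig in *; nra). destruct (Rlt_le_dec d (P j)); auto. assert (0 <= (d - P j) * sig) by (apply Rmult_le_pos; lra). lra. }
      destruct (Nat.eqb_spec k i); destruct (Nat.eqb_spec k j); try subst k; try lia; lra.
    + unfold shift. rewrite rsum_plus, rsum_minus, !rsum_delta by auto. lra. Qed.


Fixpoint dsum (l : list (nat*nat*R)) : R := match l with nil => 0 | (_,_,d)::l' => d + dsum l' end.
Fixpoint margin (Ps P : nat -> R) (m : R) (l : list (nat*nat*R)) : Prop :=
  match l with nil => True | (i,j,_)::l' => Ps i * P j - Ps j * P i > m /\ margin Ps P m l' end.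

Lemma dsum_nonneg n x l : validl n x l -> 0 <= dsum l.
Proof. induction l as [|[[i j] d] l IH]; simpl; intros; [lra|]. destruct H as [_ [_ [_ [Hd [_ Hl]]]]].
  specialize (IH Hl). lra. Qed.

Lemma margin_mono Ps P m1 m2 l : m1 <= m2 -> margin Ps P m2 l -> margin Ps P m1 l.
Proof. induction l as [|[[i j] d] l IH]; simpl; auto. intros Hm [H1 H2]. split; [lra|auto]. Qed.

Lemma abs_le_inv a b : Rabs a <= b -> - b <= a <= b.
Proof. unfold Rabs; destruct Rcase_abs; lra. Qed.

Lemma margin_shift n Ps x P P' m e l : validl n x l -> (forall k, (k<n)%nat -> 0 <= Ps k <= 1) ->
  (forall k, (k<n)%nat -> Rabs (P' k - P k) <= e) -> margin Ps P m l -> margin Ps P' (m - 2*e) l.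
Proof. intros Hv HPs Hd. induction l as [|[[i j] d] l IH]; simpl; auto.
  destruct Hv as [Hi [Hj [_ [_ [_ Hl]]]]]. intros [H1 H2]. split; auto.
  pose proof (HPs i Hi). pose proof (HPs j Hj).
  pose proof (Hd i Hi) as Di. pose proof (Hd j Hj) as Dj.
  apply abs_le_inv in Di. apply abs_le_inv in Dj.
  assert (Ps i * (P' j - P j) >= - e) by nra. assert (Ps j * (P' i - P i) <= e) by nra. nra. Qed.

Lemma shift_close P i j d k : i <> j -> 0 <= d -> Rabs (shift P i j d k - P k) <= d.
Proof. intros Hij Hd. unfold shift. destruct (Nat.eqb_spec k i); destruct (Nat.eqb_spec k j); try (subst; lia);
  [replace (P k + (d - 0) - P k) with d by ring | replace (P k + (0 - d) - P k) with (-d) by ring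
  | replace (P k + (0 - 0) - P k) with 0 by ring]; rewrite ?Rabs_Ropp, ?Rabs_R0, ?Rabs_right; lra. Qed.

Lemma chain n Ps x : (forall k, (k<n)%nat -> 0 < Ps k) -> rsum n Ps = 1 ->
  forall l, validl n x l -> forall P e, in_pos_simplex n P -> 0 < e -> margin Ps P (2*e*dsum l) l ->
  markov_order n Ps P (fun k => P k + e * mv l k).
Proof. intros HPs HPs1 l. induction l as [|[[i j] d] l IH]; intros Hv P e HP He Hm.
  - replace (fun k => P k + e * mv nil k) with P. apply step_order; auto. apply step_refl.
    apply functional_extensionality; intros; simpl; ring.
  - pose proof Hv as Hv0. destruct Hv as [Hi [Hj [Hij [Hd [_ Hl]]]]]. destruct Hm as [Hm1 Hm2].
    pose proof (dsum_nonneg n x l Hl).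
    assert (Hs : Ps i + Ps j <= 1) by (rewrite <- HPs1; apply rsum_two; auto; intros; left; apply HPs; auto).
    pose proof (HPs i Hi); pose proof (HPs j Hj).
    destruct (two_state n Ps P i j (e * d) HPs HP Hi Hj Hij ltac:(nra) ltac:(simpl dsum in Hm1;
      assert (e * d * (Ps i + Ps j) <= e * d) by (assert (0 < e * d) by nra; nra);
      assert (e * d < 2 * e * (d + dsum l)) by nra; lra)) as [Hst Hsimp].
    assert (HPs01 : forall k, (k<n)%nat -> 0 <= Ps k <= 1).
    { intros k Hk. split. left; auto. rewrite <- HPs1. apply rsum_one; auto. intros; left; auto. }
    pose proof (margin_shift n Ps x P (shift P i j (e * d)) (2 * e * dsum ((i,j,d)::l)) (e * d) l Hl HPs01
      (fun k _ => shift_close P i j (e*d) k Hij ltac:(nra)) Hm2) as Hm'.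
    simpl dsum in Hm'. replace (2 * e * (d + dsum l) - 2 * (e * d)) with (2 * e * dsum l) in Hm' by ring.
    specialize (IH Hl (shift P i j (e * d)) e Hsimp He Hm').
    replace (fun k => P k + e * mv ((i,j,d)::l) k) with (fun k => shift P i j (e * d) k + e * mv l k).
    apply order_trans with (shift P i j (e * d)); auto. apply step_order; auto.
    apply functional_extensionality; intros k. unfold shift. simpl.
    destruct (k =? i)%nat; destruct (k =? j)%nat; ring. Qed.

Lemma margin_exists n Ps P0 l : (forall k, (k<n)%nat -> 0 < Ps k) ->
  validl n (fun i => P0 i / Ps i) l -> exists m, m > 0 /\ margin Ps P0 m l.
Proof. intros HPs. induction l as [|[[i j] d] l IH]; simpl; intros Hv.
  - exists 1; split; auto; lra.
  - destruct Hv as [Hi [Hj [_ [_ [Hx Hl]]]]]. destruct (IH Hl) as [m [Hm Hmar]].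
    pose proof (HPs i Hi); pose proof (HPs j Hj).
    assert (HD : 0 < Ps i * P0 j - Ps j * P0 i).
    { apply Rmult_lt_compat_r with (r := Ps i * Ps j) in Hx; [|nra].
      replace (P0 i / Ps i * (Ps i * Ps j)) with (Ps j * P0 i) in Hx by (field; lra).
      replace (P0 j / Ps j * (Ps i * Ps j)) with (Ps i * P0 j) in Hx by (field; lra). lra. }
    exists (Rmin m ((Ps i * P0 j - Ps j * P0 i) / 2)). split. apply Rmin_glb_lt; lra.
    split. pose proof (Rmin_r m ((Ps i * P0 j - Ps j * P0 i) / 2)). lra.
    apply margin_mono with m; auto. apply Rmin_l. Qed.

Lemma mv_zero_out l k n x : validl n x l -> (n <= k)%nat -> mv l k = 0.
Proof. induction l as [|[[i j] d] l IH]; simpl; intros Hv Hk; auto.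
  destruct Hv as [Hi [Hj [_ [_ [_ Hl]]]]]. rewrite IH; auto.
  destruct (Nat.eqb_spec k i); destruct (Nat.eqb_spec k j); try lia; ring. Qed.

Lemma H_to_markov n Ps P0 P1 : (forall k, (k<n)%nat -> 0 < Ps k) -> rsum n Ps = 1 ->
  in_pos_simplex n P0 -> in_pos_simplex n P1 -> H_order n Ps P0 P1 ->
  exists P2 e, markov_order n Ps P0 P2 /\ 0 < e <= 1 /\ forall k, (k<n)%nat -> P2 k = P0 k + e * (P1 k - P0 k).
Proof. intros HPs HPs1 H0 H1 HH.
  set (v := fun k => P1 k - P0 k). set (x := fun i => P0 i / Ps i).
  destruct (greedy n x (cnt n v) v (le_n _)) as [l [Hl Hlv]].
  { unfold v. rewrite rsum_minus. destruct H0, H1. lra. }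
  { intros S HS. apply (cut_from_H n Ps P0 P1 S HPs HH HS). }
  destruct (margin_exists n Ps P0 l HPs Hl) as [m [Hm Hmar]].
  pose proof (dsum_nonneg n x l Hl) as HS.
  set (e := Rmin 1 (m / (2 * dsum l + 1))).
  assert (He : 0 < e) by (unfold e; apply Rmin_glb_lt; [lra| apply Rdiv_lt_0_compat; lra]).
  assert (He1 : e <= 1) by apply Rmin_l.
  assert (He2 : e <= m / (2 * dsum l + 1)) by apply Rmin_r.
  assert (He3 : 2 * e * dsum l <= m).
  { assert (e * (2 * dsum l + 1) <= m).
    { apply Rmult_le_reg_r with (/ (2 * dsum l + 1)). apply Rinv_0_lt_compat; lra.
      rewrite Rmult_assoc, Rinv_r by lra. unfold Rdiv in He2. lra. }
    nra. }
  exists (fun k => P0 k + e * mv l k), e. split.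
  - apply chain with x; auto. apply margin_mono with m; auto.
  - split; [lra|]. intros k Hk. rewrite <- Hlv by auto. reflexivity. Qed.


Lemma not_veq_ex n P Q : ~ veq n P Q -> exists i, (i<n)%nat /\ P i <> Q i.
Proof. intros H. apply NNPP. intros Hn. apply H. intros i Hi. apply NNPP. intros Hne. apply Hn. eauto. Qed.

Theorem corollary2 (n : nat) (Ps : nat -> R) (k : nat)
    (m : nat -> nat -> R) (M : nat -> R) :
  (2 <= n)%nat ->
  in_pos_simplex n Ps ->
  (forall j, (j < n)%nat -> m 0%nat j = 1) ->
  M 0%nat = 1 ->
  (exists P, in_L n k m M P /\ in_pos_simplex n P) ->
  forall P0 : nat -> R,
    minimal_in n (fun P => in_L n k m M P /\ in_pos_simplex n P) (markov_order n Ps) P0 <->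
    minimal_in n (fun P => in_L n k m M P /\ in_pos_simplex n P) (H_order n Ps) P0.
Proof.
  intros Hn [HPsp HPs1] Hm0 HM0 Hex P0. split.
  - intros [HS0 Hnot]. split; auto. intros [P1 [HS1 [Hne HH]]]. apply Hnot.
    destruct (H_to_markov n Ps P0 P1 HPsp HPs1 (proj2 HS0) (proj2 HS1) HH) as [P2 [e [HMo [He HP2]]]].
    exists P2. split; [split|split].
    + intros r Hr. rewrite (rsum_ext n _ (fun j => m r j * P0 j + e * (m r j * P1 j - m r j * P0 j))).
      rewrite rsum_plus, rsum_scal, rsum_minus. rewrite (proj1 HS0 r Hr), (proj1 HS1 r Hr). ring.
      intros j Hj. rewrite HP2 by auto. ring.
    + exact (proj1 (proj2 HMo)).
    + intros Hv. apply Hne. intros i Hi. specialize (Hv i Hi). rewrite HP2 in Hv by auto.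
      assert (e * (P1 i - P0 i) = 0) by lra. apply Rmult_integral in H. destruct H; lra.
    + auto.
  - intros [HS0 Hnot]. split; auto. intros [P1 [HS1 [Hne HMo]]]. apply Hnot.
    destruct HS0 as [HL0 [HP0 HP01]]. destruct HS1 as [HL1 [HP1 HP11]].
    exists (fun j => (P0 j + P1 j) / 2). split; [split; [|split]|split].
    + intros r Hr. rewrite (rsum_ext n _ (fun j => / 2 * (m r j * P0 j + m r j * P1 j))).
      rewrite rsum_scal, rsum_plus, HL0, HL1 by auto. lra. intros j _. field.
    + intros i Hi. specialize (HP0 i Hi). specialize (HP1 i Hi). lra.
    + rewrite (rsum_ext n _ (fun j => / 2 * (P0 j + P1 j))). rewrite rsum_scal, rsum_plus. lra.
      intros; field.
    + intros Hv. apply Hne. intros i Hi. specialize (Hv i Hi). simpl in Hv. lra.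
    + intros h Hh.
      pose proof (f_div_mono n Ps P0 P1 h HPsp (conj HP0 HP01) (conj HP1 HP11) HMo Hh) as Hmono.
      destruct (not_veq_ex n P1 P0 Hne) as [i0 [Hi0 Hne0]].
      assert (Hlt : f_div n h (fun j => (P0 j + P1 j) / 2) Ps <
        rsum n (fun j => / 2 * (Ps j * h (P0 j / Ps j) + Ps j * h (P1 j / Ps j)))).
      { unfold f_div. apply rsum_lt.
        - intros j Hj. pose proof (HPsp j Hj). pose proof (HP0 j Hj). pose proof (HP1 j Hj).
          replace ((P0 j + P1 j) / 2 / Ps j) with (/2 * (P0 j / Ps j) + (1 - /2) * (P1 j / Ps j)) by (field; lra).
          destruct (Req_dec (P0 j / Ps j) (P1 j / Ps j)) as [E|E].
          + rewrite E. replace (/ 2 * (P1 j / Ps j) + (1 - / 2) * (P1 j / Ps j)) with (P1 j / Ps j) by lra. lra.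
          + pose proof (Hh (P0 j / Ps j) (P1 j / Ps j) (/2) ltac:(apply Rdiv_lt_0_compat; lra)
              ltac:(apply Rdiv_lt_0_compat; lra) E ltac:(lra)). nra.
        - exists i0. split; auto. pose proof (HPsp i0 Hi0). pose proof (HP0 i0 Hi0). pose proof (HP1 i0 Hi0).
          replace ((P0 i0 + P1 i0) / 2 / Ps i0) with (/2 * (P0 i0 / Ps i0) + (1 - /2) * (P1 i0 / Ps i0)) by (field; lra).
          assert (E : P0 i0 / Ps i0 <> P1 i0 / Ps i0).
          { intros E. apply Hne0. apply (Rmult_eq_reg_r (/ Ps i0)). unfold Rdiv in E. lra.
            apply Rinv_neq_0_compat; lra. }
          pose proof (Hh (P0 i0 / Ps i0) (P1 i0 / Ps i0) (/2) ltac:(apply Rdiv_lt_0_compat; lra)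
              ltac:(apply Rdiv_lt_0_compat; lra) E ltac:(lra)). nra. }
      rewrite rsum_scal, rsum_plus in Hlt. unfold f_div in *. lra.
Qed.
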